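(* Let $\underline{X}=(X_n,p_n)$ be an inverse sequence of sets and $(T_{\underline{X}},v)$ its tree. If $\underline{X}$ is Mittag-Leffler, then for each $n_0$ there is $n_1>n_0$ such that for every $\alpha\in X_{n_0}$ extendable to $n_1$, the arc in $T_{\underline{X}}$ from the root $v$ to the vertex $\alpha$ is geodesically complete, i.e. it is contained in the image of an isometric embedding $F:[0,\infty)\to T_{\underline{X}}$ with $F(0)=v$.
   Context: An inverse sequence of sets $(X_n,p_n)_{n\ge1}$ has maps $p_n:X_{n+1}\to X_n$; $p_{nm}=p_n\circ\cdots\circ p_{m-1}:X_m\to X_n$. Its tree $T_{\underline{X}}$ is the geometric realization of the graph with vertices $\{v\}\sqcup\bigsqcup_nX_n$ and edges $\{x,p_n(x)\}$ ($x\in X_{n+1}$) and $\{x,v\}$ ($x\in X_1$), edges of length 1, path metric, rooted at $v$. $\underline{X}$ is Mittag-Leffler (ML) if for every $n_0$ there is $n_1>n_0$ such that for all $n>n_1$, $p_{n_0n}(X_n)=p_{n_0n_1}(X_{n_1})$. An element $\alpha\in X_{n_0}$ is extendable to $n_1$ if there is $\beta\in X_{n_1}$ with $p_{n_0n_1}(\beta)=\alpha$. *)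

(* Defs.v *)
From Stdlib Require Import Reals Lra Classical ClassicalEpsilon.
Open Scope R_scope.

Set Implicit Arguments.

(* Inverse sequence of sets, 0-based: the paper's X_1, X_2, ... are X 0, X 1, ...
   and p n : X (S n) -> X n is the bonding map. The root v is joined to X 0. *)
Section InverseSequenceTree.

Variable X : nat -> Type.
Variable p : forall n, X (S n) -> X n.

(* anc a b  <->  n <= m and p_{nm}(b) = a, for a : X n, b : X m. *)
Inductive anc : forall n, X n -> forall m, X m -> Prop :=
| anc_refl : forall n (a : X n), anc a a
| anc_step : forall n (a : X n) m (b : X m) (c : X (S m)),
    anc a b -> p c = b -> anc a c.

Definition mittag_leffler : Prop :=
  forall n0, exists n1, (n0 < n1)%nat /\
    forall n, (n1 < n)%nat -> forall a : X n0,
      (exists b : X n, anc a b) <-> (exists b : X n1, anc a b).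

Definition extendable n0 (a : X n0) (n1 : nat) : Prop :=
  exists b : X n1, anc a b.

(* Points of the geometric realization T_X: the root v, or a point of the
   edge from x : X n to its parent (p x, or v if n = 0), at distance t in
   [0,1) from x.  Pt n x 0 is the vertex x.  Edges have length 1. *)
Inductive point : Type :=
| Root : point
| Pt : forall n (x : X n) (t : R), 0 <= t < 1 -> point.

Definition depth (P : point) : R :=
  match P with
  | Root => 0
  | @Pt n _ t _ => INR n + 1 - t
  end.

Definition agree n (x : X n) m (y : X m) (k : nat) : Prop :=
  exists z : X k, anc z x /\ anc z y.

(* depth (number of levels) of the meet of the root paths of x and y:
   the unique h with  agree k <-> k < h  (the agreement levels form an
   initial segment of nat). *)
Definition meet_depth n (x : X n) m (y : X m) : nat :=
  epsilon (inhabits 0%nat)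
    (fun h => forall k, (k < h)%nat <-> agree x y k).

(* Path metric of the R-tree T_X:
   d(P,Q) = depth P + depth Q - 2 * depth(meet of the geodesics from v). *)
Definition tdist (P Q : point) : R :=
  match P, Q with
  | Root, _ => depth Q
  | _, Root => depth P
  | @Pt n x _ _, @Pt m y _ _ =>
      depth P + depth Q
      - 2 * Rmin (INR (meet_depth x y)) (Rmin (depth P) (depth Q))
  end.

Definition on_arc n0 (a : X n0) (P : point) : Prop :=
  match P with
  | Root => True
  | @Pt k z _ _ => anc z a
  end.

Definition isometric_ray (F : R -> point) : Prop :=
  F 0 = Root /\
  forall s t, 0 <= s -> 0 <= t -> tdist (F s) (F t) = Rabs (s - t).

Definition geodesically_complete_arc n0 (a : X n0) : Prop :=
  exists F : R -> point, isometric_ray F /\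
    forall P, on_arc a P -> exists s, 0 <= s /\ F s = P.

End InverseSequenceTree.

(* Main.v *)
Require Import Defs.
From Stdlib Require Import Reals Lra Lia Classical ClassicalEpsilon ProofIrrelevance Eqdep_dec ZArith.
Open Scope R_scope.

Lemma anc_level X p n (a : X n) m (b : X m) : anc X p _ a _ b -> (n <= m)%nat.
Proof. induction 1; lia. Qed.

Lemma anc_trans X p n (a : X n) m (b : X m) k (c : X k) :
  anc X p _ a _ b -> anc X p _ b _ c -> anc X p _ a _ c.
Proof. intros H1 H2. induction H2; auto. econstructor; eauto. Qed.

Lemma anc_p X p n (y : X (S n)) : anc X p _ (p n y) _ y.
Proof. econstructor. constructor. reflexivity. Qed.

Lemma anc_unique X p k (z : X k) m (b : X m) :
  anc X p _ z _ b -> forall z' : X k, anc X p _ z' _ b -> z = z'.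
Proof.
  induction 1 as [n a | n a m b c H IH Hc]; intros z' H'.
  - inversion H' as [n1 a1 E1 E2 E3 E4 | n1 a1 m1 b1 c1 H1 Hc1 E1 E2 E3 E4].
    + apply inj_pair2_eq_dec in E2; [|exact Nat.eq_dec].
      apply inj_pair2_eq_dec in E4; [|exact Nat.eq_dec]. congruence.
    + apply anc_level in H1. lia.
  - inversion H' as [n1 a1 E1 E2 E3 E4 | n1 a1 m1 b1 c1 H1 Hc1 E1 E2 E3 E4].
    + apply anc_level in H. lia.
    + subst. apply inj_pair2_eq_dec in E2; [|exact Nat.eq_dec].
      apply inj_pair2_eq_dec in E4; [|exact Nat.eq_dec]. subst.
      apply IH; auto.
Qed.

Lemma anc_exists X p m (b : X m) k : (k <= m)%nat -> exists z : X k, anc X p _ z _ b.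
Proof.
  revert b. induction m as [|m IH]; intros b Hk.
  - assert (k = 0%nat) by lia. subst. exists b. constructor.
  - destruct (Nat.eq_dec k (S m)) as [->|Hne]. exists b; constructor.
    destruct (IH (p m b)) as [z Hz]. lia. exists z. econstructor; eauto.
Qed.

Lemma anc_mid X p n (y : X n) M (z : X M) m :
  anc X p _ y _ z -> (n <= m <= M)%nat -> exists w : X m, anc X p _ y _ w.
Proof.
  intros H Hm. destruct (anc_exists X p _ z (m)) as [w Hw]. lia.
  destruct (anc_exists X p _ w (n)) as [y' Hy']. lia.
  exists w. assert (y' = y) as <-; auto.
  eapply anc_unique; [eapply anc_trans; eauto | eauto].
Qed.

Definition Ext X p n (x : X n) := forall m, (n <= m)%nat -> exists y : X m, anc X p _ x _ y.

Lemma ext_up X p : mittag_leffler X p -> forall n (x : X n), Ext X p _ x ->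
  exists y : X (S n), p n y = x /\ Ext X p _ y.
Proof.
  intros ML n x Hx. destruct (ML (S n)) as [N1 [HN1 HML]].
  destruct (Hx (S N1)) as [z Hz]. lia.
  destruct (anc_exists X p _ z (S n)) as [y Hy]. lia.
  exists y. split.
  - eapply anc_unique; [ | exact Hz]. eapply anc_trans; [apply anc_p | exact Hy].
  - intros m Hm. destruct (Nat.le_gt_cases m (S N1)).
    + eapply anc_mid; eauto.
    + apply (HML m). lia. eapply anc_mid; eauto. lia.
Qed.

Fixpoint build X p (ML : mittag_leffler X p) n0 (a : X n0) (Ha : Ext X p _ a) (k : nat)
  : {y : X (k + n0)%nat | Ext X p _ y} :=
  match k return {y : X (k + n0)%nat | Ext X p _ y} with
  | O => exist _ a Ha
  | S k' => let r := build X p ML n0 a Ha k' in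
      exist _ (proj1_sig (constructive_indefinite_description _ (ext_up X p ML _ _ (proj2_sig r))))
              (proj2 (proj2_sig (constructive_indefinite_description _ (ext_up X p ML _ _ (proj2_sig r)))))
  end.
Arguments build {X p} ML {n0 a} Ha k.

Lemma build_p X p ML n0 a Ha k :
  p _ (proj1_sig (@build X p ML n0 a Ha (S k))) = proj1_sig (build ML Ha k).
Proof.
  simpl. match goal with |- context [constructive_indefinite_description ?P ?H] =>
    exact (proj1 (proj2_sig (constructive_indefinite_description P H))) end.
Qed.

Lemma build_anc X p ML n0 a Ha k l : (k <= l)%nat ->
  anc X p _ (proj1_sig (@build X p ML n0 a Ha k)) _ (proj1_sig (build ML Ha l)).
Proof.
  induction 1. constructor. econstructor. eauto. apply build_p.
Qed.

Definition branch X p ML n0 a Ha (n : nat) : X n :=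
  proj1_sig (constructive_indefinite_description _
    (anc_exists X p _ (proj1_sig (@build X p ML n0 a Ha n)) n ltac:(lia))).
Arguments branch {X p} ML {n0 a} Ha n.

Lemma branch_anc X p ML n0 a Ha n m : (n <= m)%nat ->
  anc X p _ (@branch X p ML n0 a Ha n) _ (branch ML Ha m).
Proof.
  intros Hnm. unfold branch.
  destruct (constructive_indefinite_description _ (anc_exists _ _ _ _ n _)) as [cn Hcn].
  destruct (constructive_indefinite_description _ (anc_exists _ _ _ _ m _)) as [cm Hcm]. simpl.
  destruct (anc_exists X p _ cm n Hnm) as [w Hw].
  assert (w = cn) as <-; auto.
  eapply anc_unique.
  - eapply anc_trans; [exact Hw | exact Hcm].
  - eapply anc_trans; [exact Hcn | apply build_anc; lia].
Qed.

Lemma branch_a X p ML n0 a Ha : @branch X p ML n0 a Ha n0 = a.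
Proof.
  unfold branch.
  destruct (constructive_indefinite_description _ (anc_exists _ _ _ _ n0 _)) as [c Hc]. simpl.
  eapply anc_unique; [exact Hc|].
  apply (build_anc X p ML n0 a Ha 0 n0). lia.
Qed.

Lemma meet_depth_spec X p n (x : X n) m (y : X m) h :
  (forall k, (k < h)%nat <-> agree X p _ x _ y k) -> meet_depth X p _ x _ y = h.
Proof.
  intros H. unfold meet_depth.
  assert (He : exists h, forall k, (k < h)%nat <-> agree X p _ x _ y k) by eauto.
  pose proof (epsilon_spec (inhabits 0%nat) _ He) as Hs.
  set (e := epsilon _ _) in *. clearbody e.
  destruct (Nat.lt_total e h) as [Hl|[Hl|Hl]]; auto.
  - apply H in Hl. apply Hs in Hl. lia.
  - apply Hs in Hl. apply H in Hl. lia.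
Qed.

Lemma meet_branch X p (c : forall n, X n) :
  (forall n m, (n <= m)%nat -> anc X p _ (c n) _ (c m)) ->
  forall n m, meet_depth X p _ (c n) _ (c m) = S (Nat.min n m).
Proof.
  intros Hc n m. apply meet_depth_spec. intros k; split.
  - intros Hk. exists (c k). split; apply Hc; lia.
  - intros [z [H1 H2]]. apply anc_level in H1. apply anc_level in H2. lia.
Qed.

Definition lvl (s : R) : nat := Z.to_nat (- up (- s)).

Lemma lvl_spec s : 0 < s -> INR (lvl s) < s <= INR (lvl s) + 1.
Proof.
  intros Hs. destruct (archimed (- s)) as [H1 H2]. unfold lvl.
  assert (Hnn : (0 <= - up (- s))%Z).
  { assert (IZR (- up (-s)) > -1) by (rewrite opp_IZR; lra).
    apply lt_IZR in H. lia. }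
  rewrite INR_IZR_INZ, Z2Nat.id by exact Hnn. rewrite opp_IZR. lra.
Qed.

Lemma lvl_unique n s : INR n < s <= INR n + 1 -> lvl s = n.
Proof.
  intros Hn. assert (Hs : 0 < s) by (pose proof (pos_INR n); lra).
  pose proof (lvl_spec s Hs) as Hl. set (m := lvl s) in *. clearbody m.
  destruct (Nat.lt_total m n) as [H|[H|H]]; auto.
  - apply le_INR in H. rewrite S_INR in H. lra.
  - apply le_INR in H. rewrite S_INR in H. lra.
Qed.

Definition mkPt X (c : forall n, X n) n s (H : INR n < s <= INR n + 1) : point X :=
  Pt X n (c n) (t := INR n + 1 - s) ltac:(destruct H; split; lra).
Arguments mkPt {X} c n s H.

Definition ray X (c : forall n, X n) (s : R) : point X :=
  match Rlt_dec 0 s with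
  | left h => mkPt c (lvl s) s (lvl_spec _ h)
  | right _ => Root X
  end.
Arguments ray {X} c s.

Lemma Pt_eq X n (x : X n) t1 t2 H1 H2 : t1 = t2 -> Pt X n x (t := t1) H1 = Pt X n x (t := t2) H2.
Proof. intros; subst; f_equal; apply proof_irrelevance. Qed.

Lemma mkPt_irr X (c : forall n, X n) n m s H H' : n = m -> mkPt c n s H = mkPt c m s H'.
Proof. intros ->. f_equal. apply proof_irrelevance. Qed.

Theorem proposition7p7 (X : nat -> Type) (p : forall n, X (S n) -> X n) :
  mittag_leffler X p ->
  forall n0 : nat, exists n1 : nat, (n0 < n1)%nat /\
    forall a : X n0, @extendable X p n0 a n1 -> @geodesically_complete_arc X p n0 a.
Proof.
  intros ML n0. destruct (ML n0) as [n1 [Hn1 HML]]. exists n1. split; auto.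
  intros a [b Hb].
  assert (Ha : Ext X p _ a).
  { intros m Hm. destruct (Nat.le_gt_cases m n1).
    - eapply anc_mid; eauto.
    - apply (HML m H a). eauto. }
  set (c := branch ML Ha).
  assert (Hc : forall n m, (n <= m)%nat -> anc X p _ (c n) _ (c m)) by (intros; apply branch_anc; auto).
  assert (Hca : c n0 = a) by apply branch_a.
  exists (ray c). split.
  - split. { unfold ray; destruct Rlt_dec as [h0|h0]; [exfalso; lra|auto]. }
    intros s t Hs Ht. unfold ray.
    destruct (Rlt_dec 0 s) as [hs|hs], (Rlt_dec 0 t) as [ht|ht]; simpl.
    + rewrite (meet_branch X p c Hc).
      pose proof (lvl_spec _ hs). pose proof (lvl_spec _ ht).
      destruct (Nat.le_ge_cases (lvl s) (lvl t)) as [Hl|Hl].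
      * rewrite Nat.min_l by exact Hl. apply le_INR in Hl. rewrite S_INR.
        unfold Rmin, Rabs; repeat destruct Rle_dec; destruct Rcase_abs; lra.
      * rewrite Nat.min_r by exact Hl. apply le_INR in Hl. rewrite S_INR.
        unfold Rmin, Rabs; repeat destruct Rle_dec; destruct Rcase_abs; lra.
    + unfold Rabs; destruct Rcase_abs; lra.
    + unfold Rabs; destruct Rcase_abs; lra.
    + unfold Rabs; destruct Rcase_abs; lra.
  - intros P HP. destruct P as [| k z t Ht].
    + exists 0. split; [lra|]. unfold ray; destruct Rlt_dec as [h0|h0]; [exfalso; lra|auto].
    + simpl in HP. exists (INR k + 1 - t). split; [pose proof (pos_INR k); lra|].
      assert (Hk : (k <= n0)%nat) by (eapply anc_level; eauto).
      assert (Hz : z = c k).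
      { eapply anc_unique; [exact HP|]. rewrite <- Hca. apply Hc; auto. }
      unfold ray. destruct Rlt_dec as [h|h]; [|exfalso; pose proof (pos_INR k); lra].
      assert (Hsp : INR k < INR k + 1 - t <= INR k + 1) by lra.
      rewrite (mkPt_irr X c _ _ _ (lvl_spec _ h) Hsp (lvl_unique _ _ Hsp)).
      unfold mkPt. subst z. apply Pt_eq. ring.
Qed.
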